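(* Let $n\ge 2$ and let the billiard domain $\mathcal{B}\subset\mathbb{R}^n$ be the region between two parallel affine hyperplanes. Then every trajectory of the no-slip billiard in $\mathcal{B}$ whose initial center-of-mass velocity is not parallel to the hyperplanes is bounded (the position of the particle's center of mass remains in a bounded set). Trajectories remain bounded if a constant force is applied to the particle's center of mass along any direction parallel to the hyperplanes.
   Context: The moving particle is a ball of radius $r>0$ with a rotationally symmetric mass distribution of total mass $m$ whose second-moment matrix per unit mass is $\lambda I$, $\lambda=(r\gamma)^2/2$, $\gamma>0$. Put $c=\frac{1-\gamma^2}{1+\gamma^2}$, $s=\frac{2\gamma}{1+\gamma^2}$, and for $a,b\in\mathbb{R}^n$ let $a\wedge b\in\mathfrak{so}(n)$ be $(a\wedge b)x=(a\cdot x)b-(b\cdot x)a$. The billiard domain $\mathcal{B}$ is the set of admissible positions of the particle's center; at a boundary point $a$, $\nu_a$ is the unit normal pointing into $\mathcal{B}$. A state is $(a,u,U)$ with $u$ the center-of-mass velocity and $U\in\mathfrak{so}(n)$ the angular velocity matrix (a material point at $x$ has velocity $U(x-a)+u$). A no-slip billiard trajectory: between collisions $U$ is constant and the center of mass moves freely (or with constant acceleration $F/m$ under a constant force $F$); at a collision at $a$ the pre-collision $(u,U)$ is replaced by $C_a(u,U)=\big(cu-\tfrac{s}{\gamma}(u\cdot\nu_a)\nu_a+s\gamma rU\nu_a,\ \tfrac{s}{\gamma r}\nu_a\wedge u+U-\tfrac{s}{\gamma}\nu_a\wedge U\nu_a\big)$. *)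

(* Defs.v *)
From HB Require Import structures.
From mathcomp Require Import all_boot all_order all_algebra.
From mathcomp Require Import reals.
Set Implicit Arguments.
Unset Strict Implicit.
Unset Printing Implicit Defensive.
Import Order.TTheory GRing.Theory Num.Theory.
Local Open Scope ring_scope.

Definition vdot (R : nzRingType) (n : nat) (a b : 'cV[R]_n) : R :=
  \sum_(i < n) a i 0 * b i 0.

(* (a /\ b) x = (a . x) b - (b . x) a,  i.e.  a /\ b = b a^T - a b^T *)
Definition wedge (R : nzRingType) (n : nat) (a b : 'cV[R]_n) : 'M[R]_n :=
  b *m a^T - a *m b^T.

Definition skew (R : nzRingType) (n : nat) (U : 'M[R]_n) : Prop := U^T = - U.

Definition cfac (R : fieldType) (g : R) : R := (1 - g ^+ 2) / (1 + g ^+ 2).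
Definition sfac (R : fieldType) (g : R) : R := (2 * g) / (1 + g ^+ 2).

(* The no-slip collision map C_a(u,U), with nu = nu_a the inward unit normal *)
Definition coll_u (R : fieldType) (n : nat) (r g : R) (nu u : 'cV[R]_n)
  (U : 'M[R]_n) : 'cV[R]_n :=
  cfac g *: u - (sfac g / g * vdot u nu) *: nu + (sfac g * g * r) *: (U *m nu).

Definition coll_U (R : fieldType) (n : nat) (r g : R) (nu u : 'cV[R]_n)
  (U : 'M[R]_n) : 'M[R]_n :=
  (sfac g / (g * r)) *: wedge nu u + U - (sfac g / g) *: wedge nu (U *m nu).

(* A (forward) no-slip billiard trajectory, for t >= 0, in a domain with
   admissible-position predicate inB, boundary predicate bd and inward unit
   normal field nu, under constant force F on the center of mass.
   tau 0 = 0 is the initial time, tau (k+1) is the (k+1)-st collision time;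
   on [tau k, tau (k+1)) the motion is free (constant acceleration F/m,
   constant U); at tau (k+1) the center is on the boundary and the
   pre-collision velocities are replaced by their image under C. *)
Definition noslip_traj (R : realType) (n : nat) (r g m : R) (F : 'cV[R]_n)
  (inB bd : 'cV[R]_n -> Prop) (nu : 'cV[R]_n -> 'cV[R]_n)
  (a u : R -> 'cV[R]_n) (U : R -> 'M[R]_n) (tau : nat -> R) : Prop :=
  [/\ tau 0%N = 0,
      (forall k, tau k < tau k.+1),
      (forall t, 0 <= t -> exists k, tau k <= t < tau k.+1),
      (forall t, 0 <= t -> inB (a t)) &
      skew (U 0)] /\ 
      (forall k t, tau k <= t < tau k.+1 ->
         [/\ U t = U (tau k),
             u t = u (tau k) + ((t - tau k) / m) *: F &
             a t = a (tau k) + (t - tau k) *: u (tau k)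
                   + ((t - tau k) ^+ 2 / (2 * m)) *: F]) /\
      (forall k,
         let dt := tau k.+1 - tau k in
         let p := a (tau k) + dt *: u (tau k) + (dt ^+ 2 / (2 * m)) *: F in
         let v := u (tau k) + (dt / m) *: F in
         [/\ a (tau k.+1) = p, bd p,
             u (tau k.+1) = coll_u r g (nu p) v (U (tau k)) &
             U (tau k.+1) = coll_U r g (nu p) v (U (tau k))]).

Definition slab (R : realType) (n : nat) (e : 'cV[R]_n) (al be : R)
  (x : 'cV[R]_n) : Prop := al <= vdot x e <= be.

Definition slab_bd (R : realType) (n : nat) (e : 'cV[R]_n) (al be : R)
  (x : 'cV[R]_n) : Prop := vdot x e = al \/ vdot x e = be.

Definition slab_normal (R : realType) (n : nat) (e : 'cV[R]_n) (al be : R)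
  (x : 'cV[R]_n) : 'cV[R]_n := if vdot x e == al then e else - e.

(* Main.v *)
Require Import Defs.
From HB Require Import structures.
From mathcomp Require Import all_boot all_order all_algebra.
From mathcomp Require Import reals.
From mathcomp Require Import ring lra.
Import Order.TTheory GRing.Theory Num.Theory.
Local Open Scope ring_scope.
Set Implicit Arguments.
Unset Strict Implicit.

Lemma vdotC (R : realType) n (a b : 'cV[R]_n) : vdot a b = vdot b a.
Proof. by rewrite /vdot; apply: eq_bigr => i _; rewrite mulrC. Qed.

Lemma vdotDl (R : realType) n (a b c : 'cV[R]_n) : vdot (a + b) c = vdot a c + vdot b c.
Proof. by rewrite /vdot -big_split; apply: eq_bigr => i _; rewrite !mxE mulrDl. Qed.

Lemma vdotZl (R : realType) n k (a c : 'cV[R]_n) : vdot (k *: a) c = k * vdot a c.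
Proof. by rewrite /vdot mulr_sumr; apply: eq_bigr => i _; rewrite !mxE mulrA. Qed.

Lemma vdotNl (R : realType) n (a c : 'cV[R]_n) : vdot (- a) c = - vdot a c.
Proof. by rewrite -scaleN1r vdotZl mulN1r. Qed.

Lemma vdotBl (R : realType) n (a b c : 'cV[R]_n) : vdot (a - b) c = vdot a c - vdot b c.
Proof. by rewrite vdotDl vdotNl. Qed.

Lemma vdotDr (R : realType) n (a b c : 'cV[R]_n) : vdot c (a + b) = vdot c a + vdot c b.
Proof. by rewrite !(vdotC c) vdotDl. Qed.
Lemma vdotZr (R : realType) n k (a c : 'cV[R]_n) : vdot c (k *: a) = k * vdot c a.
Proof. by rewrite !(vdotC c) vdotZl. Qed.
Lemma vdotNr (R : realType) n (a c : 'cV[R]_n) : vdot c (- a) = - vdot c a.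
Proof. by rewrite !(vdotC c) vdotNl. Qed.
Lemma vdotBr (R : realType) n (a b c : 'cV[R]_n) : vdot c (a - b) = vdot c a - vdot c b.
Proof. by rewrite !(vdotC c) vdotBl. Qed.

Lemma vdot_tr (R : realType) n (a b : 'cV[R]_n) : a^T *m b = (vdot a b)%:M.
Proof.
rewrite [LHS]mx11_scalar; congr (_%:M).
by rewrite !mxE /vdot; apply: eq_bigr => i _; rewrite !mxE.
Qed.

Lemma wedge_mul (R : realType) n (a b x : 'cV[R]_n) :
  wedge a b *m x = vdot a x *: b - vdot b x *: a.
Proof.
by rewrite /wedge mulmxBl -!mulmxA !vdot_tr !mul_mx_scalar.
Qed.

Lemma skew_vdot (R : realType) n (V : 'M[R]_n) (x : 'cV[R]_n) : Defs.skew V -> vdot x (V *m x) = 0.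
Proof.
move=> hV.
have h : (x^T *m (V *m x)) = - (x^T *m (V *m x)).
  have t1 : (x^T *m (V *m x))^T = x^T *m (V *m x).
    by rewrite [X in X^T]mx11_scalar tr_scalar_mx -mx11_scalar.
  rewrite -[LHS]t1 trmx_mul trmx_mul trmxK hV.
  by rewrite mulmxN mulmxA mulNmx.
move: h; rewrite vdot_tr => h.
have h2 := congr1 (fun M : 'M[R]_1 => M 0 0) h.
move: h2; rewrite /= !mxE /= mulr1n => h2.
lra.
Qed.

Lemma skew_wedge (R : realType) n (a b : 'cV[R]_n) : Defs.skew (wedge a b).
Proof.
by rewrite /Defs.skew /wedge linearB /= !trmx_mul !trmxK opprB.
Qed.

Lemma skewD (R : realType) n (A B : 'M[R]_n) :
  Defs.skew A -> Defs.skew B -> Defs.skew (A + B).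
Proof. by rewrite /Defs.skew => hA hB; rewrite linearD /= hA hB opprD. Qed.

Lemma skewZ (R : realType) n k (A : 'M[R]_n) :
  Defs.skew A -> Defs.skew (k *: A).
Proof. by rewrite /Defs.skew => hA; rewrite linearZ /= hA scalerN. Qed.

Lemma skewN (R : realType) n (A : 'M[R]_n) :
  Defs.skew A -> Defs.skew (- A).
Proof. by rewrite /Defs.skew => hA; rewrite linearN /= hA. Qed.

Lemma skew_coll (R : realType) n r g (nu u : 'cV[R]_n) (U : 'M[R]_n) :
  Defs.skew U -> Defs.skew (coll_U r g nu u U).
Proof.
move=> hU; rewrite /coll_U.
apply: skewD; last by apply/skewN/skewZ/skew_wedge.
by apply: skewD => //; apply/skewZ/skew_wedge.
Qed.

Lemma coord_sq (R : realType) n (x : 'cV[R]_n) i : x i 0 ^+ 2 <= vdot x x.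
Proof.
rewrite /vdot (bigD1 i) //= -expr2 lerDl.
by apply: sumr_ge0 => j _; rewrite -expr2 sqr_ge0.
Qed.

Lemma abs_le_sq (R : realType) (x E : R) : x ^+ 2 <= E -> `|x| <= 1 + E.
Proof.
move=> h; case: (lerP `|x| 1) => hx.
  have : 0 <= E by apply: le_trans h; exact: sqr_ge0.
  lra.
have : `|x| <= `|x| ^+ 2.
  rewrite expr2; set y := `|x|; move: hx; rewrite -/y => hx; nra.
rewrite real_normK ?num_real //; lra.
Qed.

Definition proj (R : realType) n (e x : 'cV[R]_n) : 'cV[R]_n := x - vdot x e *: e.

Lemma cs_id (R : realType) (g : R) : 0 < g -> cfac g - sfac g / g = -1.
Proof.
move=> hg; rewrite /cfac /sfac.
have h1 : 1 + g ^+ 2 != 0 by apply/lt0r_neq0; have := sqr_ge0 g; lra.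
have h2 : g != 0 by apply/lt0r_neq0.
by field; rewrite h1 h2.
Qed.

Lemma cs_sq (R : realType) (g : R) : 0 < g -> cfac g ^+ 2 + sfac g ^+ 2 = 1.
Proof.
move=> hg; rewrite /cfac /sfac.
have h1 : 1 + g ^+ 2 != 0 by apply/lt0r_neq0; have := sqr_ge0 g; lra.
by field; rewrite h1.
Qed.

Lemma sfac_gt0 (R : realType) (g : R) : 0 < g -> 0 < sfac g.
Proof.
move=> hg; rewrite /sfac; apply: divr_gt0; first lra.
have := sqr_ge0 g; lra.
Qed.


Lemma nu_props (R : realType) n (e nu : 'cV[R]_n) :
  vdot e e = 1 -> (nu = e \/ nu = - e) ->
  [/\ vdot nu nu = 1, (forall x, vdot x nu *: nu = vdot x e *: e),
      (forall x, vdot x nu = 0 -> vdot x e = 0) & vdot nu e *: nu = e].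
Proof.
move=> he [->|->]; split => //.
- by rewrite he scale1r.
- by rewrite vdotNr vdotNl opprK.
- by move=> x; rewrite vdotNr scaleNr scalerN opprK.
- by move=> x; rewrite vdotNr => /eqP; rewrite oppr_eq0 => /eqP.
- by rewrite vdotNl he scaleNr scalerN opprK scale1r.
Qed.

Lemma coll_props (R : realType) n r g (e nu v : 'cV[R]_n) (U : 'M[R]_n) :
  0 < r -> 0 < g -> vdot e e = 1 -> (nu = e \/ nu = - e) -> Defs.skew U ->
  [/\ vdot (coll_u r g nu v U) e = - vdot v e,
      proj e (coll_u r g nu v U) = cfac g *: proj e v + (sfac g * g * r) *: (U *m nu),
      coll_U r g nu v U *m nu = (sfac g / (g * r)) *: proj e v + (1 - sfac g / g) *: (U *m nu),
      vdot (U *m nu) e = 0 &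
      proj e (U *m nu) = U *m nu].
Proof.
move=> hr hg he hnu hU.
have [hnn hxn hor hne] := nu_props he hnu.
have hUn : vdot (U *m nu) e = 0 by apply: hor; rewrite vdotC skew_vdot.
have hUn' : vdot (U *m nu) nu = 0 by rewrite vdotC skew_vdot.
have hpe : proj e e = 0 by rewrite /proj he scale1r subrr.
have hproj_lin : forall (a b : R) (x y : 'cV[R]_n),
    proj e (a *: x + b *: y) = a *: proj e x + b *: proj e y.
  move=> a b x y; rewrite /proj vdotDl !vdotZl scalerDl !scalerBr !scalerA.
  by rewrite addrACA opprD.
have hPU : proj e (U *m nu) = U *m nu by rewrite /proj hUn scale0r subr0.
split => //.
- rewrite /coll_u !vdotDl vdotNl !vdotZl hUn mulr0 addr0.
  have h1 : vdot v nu * vdot nu e = vdot v e.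
    by rewrite -vdotZl hxn vdotZl he mulr1.
  by rewrite -[_ * vdot v nu * _]mulrA h1 -mulrBl cs_id // mulN1r.
- have hpD : forall x y, proj e (x + y) = proj e x + proj e y.
    by move=> x y; rewrite /proj vdotDl scalerDl opprD addrACA.
  have hpZ : forall k x, proj e (k *: x) = k *: proj e x.
    by move=> k x; rewrite /proj vdotZl scalerBr scalerA.
  have hpN : forall x, proj e (- x) = - proj e x.
    by move=> x; rewrite -scaleN1r hpZ scaleN1r.
  have hpn : proj e nu = 0.
    case: hnu => ->; rewrite /proj; first by rewrite he scale1r subrr.
    by rewrite vdotNl he scaleN1r subrr.
  by rewrite /coll_u !hpD hpN !hpZ hpn scaler0 oppr0 addr0 hPU.
- rewrite /coll_U !mulmxDl mulNmx -!scalemxAl !wedge_mul hnn !scale1r hxn hUn' scale0r subr0.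
  rewrite -/(proj e v).
  by rewrite scalerBl scale1r addrA.
Qed.

Lemma projD (R : realType) n (e x y : 'cV[R]_n) : proj e (x + y) = proj e x + proj e y.
Proof. by rewrite /proj vdotDl scalerDl opprD addrACA. Qed.
Lemma projZ (R : realType) n (e x : 'cV[R]_n) k : proj e (k *: x) = k *: proj e x.
Proof. by rewrite /proj vdotZl scalerBr scalerA. Qed.
Lemma projN (R : realType) n (e x : 'cV[R]_n) : proj e (- x) = - proj e x.
Proof. by rewrite -scaleN1r projZ scaleN1r. Qed.
Lemma proj_orth (R : realType) n (e x : 'cV[R]_n) : vdot x e = 0 -> proj e x = x.
Proof. by rewrite /proj => ->; rewrite scale0r subr0. Qed.
Lemma proj_coord (R : realType) n (e x : 'cV[R]_n) i :
  x i 0 = proj e x i 0 + vdot x e * e i 0.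
Proof. by rewrite /proj !mxE subrK. Qed.

Lemma rot_norm (R : realType) n (c s : R) (A B : 'cV[R]_n) : c ^+ 2 + s ^+ 2 = 1 ->
  vdot (c *: A + s *: B) (c *: A + s *: B) + vdot (- s *: A + c *: B) (- s *: A + c *: B)
  = vdot A A + vdot B B.
Proof.
move=> h.
rewrite !vdotDl !vdotDr !vdotZl !vdotZr (vdotC B A).
transitivity ((c ^+ 2 + s ^+ 2) * (vdot A A + vdot B B)); first by ring.
by rewrite h mul1r.
Qed.

Lemma vdot_ge0 (R : realType) n (x : 'cV[R]_n) : 0 <= vdot x x.
Proof. by apply: sumr_ge0 => j _; rewrite -expr2 sqr_ge0. Qed.

Lemma absM_le (R : realType) (x y X Y : R) : `|x| <= X -> `|y| <= Y -> `|x * y| <= X * Y.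
Proof.
move=> hx hy; rewrite normrM; apply: ler_pM => //; exact: normr_ge0.
Qed.

Lemma final_bound (R : realType) (qa xa xb f y ei T g m sg Kq X Kf al be : R) :
  0 < T -> 0 < g -> 0 < m -> 0 <= sg <= T -> `|qa| <= Kq -> `|xa| <= X -> `|xb| <= X ->
  `|f| <= Kf -> al <= y <= be -> `|ei| <= 2 ->
  `|qa - (T / 2) * xa - (T / (2 * g)) * xb + sg * xa + (sg ^+ 2 / (2 * m) - sg * T / (2 * m)) * f
     + y * ei| <= Kq + (T / 2) * X + (T / (2 * g)) * X + T * X + (T ^+ 2 / m) * Kf
                  + 2 * (`|al| + `|be|).
Proof.
move=> hT hg hm hsg hq hxa hxb hf hy he.
have h1 : `|(T / 2) * xa| <= (T / 2) * X.
  by apply: absM_le => //; rewrite ger0_norm //; apply: divr_ge0; lra.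
have h2 : `|(T / (2 * g)) * xb| <= (T / (2 * g)) * X.
  apply: absM_le => //; rewrite ger0_norm //; apply: divr_ge0; first lra.
  by apply: mulr_ge0; lra.
have h3 : `|sg * xa| <= T * X.
  by apply: absM_le => //; rewrite ger0_norm //; lra.
have hc : `|sg ^+ 2 / (2 * m) - sg * T / (2 * m)| <= T ^+ 2 / m.
  have -> : sg ^+ 2 / (2 * m) - sg * T / (2 * m) = (sg * (sg - T)) / (2 * m).
    by field; apply: lt0r_neq0.
  rewrite normrM normfV (gtr0_norm (_ : 0 < 2 * m)); last lra.
  rewrite ler_pdivrMr; last lra.
  have -> : T ^+ 2 / m * (2 * m) = 2 * T ^+ 2 by field; apply: lt0r_neq0.
  rewrite normrM (ger0_norm (_ : 0 <= sg)); last lra.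
  rewrite ler0_norm; last lra.
  nra.
have h4 : `|(sg ^+ 2 / (2 * m) - sg * T / (2 * m)) * f| <= (T ^+ 2 / m) * Kf.
  exact: absM_le.
have hyb : `|y| <= `|al| + `|be|.
  move/andP: hy => [hy1 hy2].
  have := ler_norm be; have := ler_norm (- al); rewrite normrN => ha hb.
  have h0a := normr_ge0 al; have h0b := normr_ge0 be.
  by rewrite ler_norml; apply/andP; split; lra.
have h5 : `|y * ei| <= (`|al| + `|be|) * 2 by exact: absM_le.
set t1 := (T / 2) * xa in h1 *; set t2 := (T / (2 * g)) * xb in h2 *.
set t3 := sg * xa in h3 *; set t4 := (_ - _) * f in h4 *; set t5 := y * ei in h5 *.
have := ler_normD (qa - t1 - t2 + t3 + t4) t5.
have := ler_normD (qa - t1 - t2 + t3) t4.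
have := ler_normD (qa - t1 - t2) t3.
have := ler_normB (qa - t1) t2.
have := ler_normB qa t1.
lra.
Qed.

Lemma init_bound (R : realType) (x0 y0 f t t1 m K0 K1 Kf : R) :
  0 < m -> 0 <= t <= t1 -> `|x0| <= K0 -> `|y0| <= K1 -> `|f| <= Kf ->
  `|x0 + t * y0 + t ^+ 2 / (2 * m) * f| <= K0 + t1 * K1 + (t1 ^+ 2 / (2 * m)) * Kf.
Proof.
move=> hm ht h0 h1 hf.
have h2 : `|t * y0| <= t1 * K1 by apply: absM_le => //; rewrite ger0_norm; lra.
have h3 : `|t ^+ 2 / (2 * m) * f| <= (t1 ^+ 2 / (2 * m)) * Kf.
  apply: absM_le => //; rewrite ger0_norm; last first.
    by apply: divr_ge0; [exact: sqr_ge0 | lra].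
  rewrite ler_pM2r; last by rewrite invr_gt0; lra.
  move/andP: ht => [ht1 ht2]; nra.
have := ler_normD (x0 + t * y0) (t ^+ 2 / (2 * m) * f).
have := ler_normD x0 (t * y0).
lra.
Qed.

Lemma slab_normal_pm (R : realType) n (e : 'cV[R]_n) al be x :
  slab_normal e al be x = e \/ slab_normal e al be x = - e.
Proof. by rewrite /slab_normal; case: ifP => _; [left|right]. Qed.

Unset Implicit Arguments.
Set Strict Implicit.

Theorem theorem2p7 (R : realType) (n : nat) (r g m al be : R)
  (e F : 'cV[R]_n) (a u : R -> 'cV[R]_n) (U : R -> 'M[R]_n) (tau : nat -> R) :
  (2 <= n)%N -> 0 < r -> 0 < g -> 0 < m ->
  vdot e e = 1 -> al < be ->
  vdot F e = 0 ->
  noslip_traj r g m F (slab e al be) (slab_bd e al be) (slab_normal e al be)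
    a u U tau ->
  vdot (u 0) e != 0 ->
  exists M : R, forall t : R, 0 <= t -> forall i : 'I_n, `|a t i 0| <= M.
Proof.
move=> _ hr hg hm he hab hFe [[h0 hinc hcov hinB hU0] [hflow hcoll]] hw0.
pose N k := slab_normal e al be (a (tau k)).
pose d k := tau k.+1 - tau k.
have hd : forall k, 0 < d k by move=> k; rewrite /d subr_gt0.
have hx : forall k, a (tau k.+1) = a (tau k) + d k *: u (tau k) + (d k ^+ 2 / (2 * m)) *: F.
  by move=> k; case: (hcoll k).
have hbd : forall k, slab_bd e al be (a (tau k.+1)).
  by move=> k; case: (hcoll k) => -> .
have hu : forall k, u (tau k.+1) = coll_u r g (N k.+1) (u (tau k) + (d k / m) *: F) (U (tau k)).
  by move=> k; case: (hcoll k) => hxk _ hu _; rewrite /N hxk.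
have hUk : forall k, U (tau k.+1) = coll_U r g (N k.+1) (u (tau k) + (d k / m) *: F) (U (tau k)).
  by move=> k; case: (hcoll k) => hxk _ _ hU; rewrite /N hxk.
have hskew : forall k, Defs.skew (U (tau k)).
  elim=> [|k ih]; first by rewrite h0.
  by rewrite hUk; apply: skew_coll.
pose w0 := vdot (u 0) e.
have hue : forall k, vdot (u (tau k)) e = w0 \/ vdot (u (tau k)) e = - w0.
  elim=> [|k ih]; first by left; rewrite h0.
  have [c1 _ _ _ _] := coll_props (u (tau k) + (d k / m) *: F) hr hg he (slab_normal_pm e al be (a (tau k.+1))) (hskew k).
  rewrite hu /N c1 vdotDl vdotZl hFe mulr0 addr0.
  by case: ih => ->; [right|left; rewrite opprK].
have hw0p : 0 < `|w0| by rewrite normr_gt0.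
have hqa : forall k, `|vdot (u (tau k)) e| = `|w0|.
  by move=> k; case: (hue k) => ->; rewrite ?normrN.
pose T := (be - al) / `|w0|.
have hT : 0 < T by apply: divr_gt0 => //; lra.
have hy : forall k, vdot (a (tau k.+1)) e = al \/ vdot (a (tau k.+1)) e = be.
  by move=> k; have := hbd k.
have hyx : forall k, vdot (a (tau k.+2)) e = vdot (a (tau k.+1)) e + d k.+1 * vdot (u (tau k.+1)) e.
  by move=> k; rewrite hx !vdotDl !vdotZl hFe mulr0 addr0.
have halt : forall k, d k.+1 = T /\ N k.+2 = - N k.+1.
  move=> k.
  have hD := hd k.+1; have hq := hqa k.+1; have hyk := hyx k.
  set D := d k.+1 in hD hyk *; set q := vdot (u (tau k.+1)) e in hq hyk.
  have hq0 : q != 0 by rewrite -normr_eq0 hq normr_eq0.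
  have hDq0 : D * q != 0 by rewrite mulf_neq0 // lt0r_neq0.
  have hDq : D * `|q| = be - al.
    rewrite -(ger0_norm (ltW hD)) -normrM.
    case: (hy k) => h1; case: (hy k.+1) => h2; rewrite h1 h2 in hyk.
    - exfalso; move: hDq0; have -> : D * q = 0 by lra. by rewrite eqxx.
    - have -> : D * q = be - al by lra. by rewrite ger0_norm //; lra.
    - have -> : D * q = - (be - al) by lra. by rewrite normrN ger0_norm //; lra.
    - exfalso; move: hDq0; have -> : D * q = 0 by lra. by rewrite eqxx.
  split.
    by rewrite /T -hDq hq mulfK // lt0r_neq0.
  rewrite /N /slab_normal.
  case: (hy k) => h1; case: (hy k.+1) => h2; rewrite h1 h2 in hyk.
  - exfalso; move: hDq0; have -> : D * q = 0 by lra. by rewrite eqxx.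
  - by rewrite h1 h2 eqxx (gt_eqF hab).
  - by rewrite h1 h2 eqxx (gt_eqF hab) opprK.
  - exfalso; move: hDq0; have -> : D * q = 0 by lra. by rewrite eqxx.
pose c := cfac g; pose s := sfac g.
have hrec : forall k,
  [/\ proj e (u (tau k.+2)) = c *: (proj e (u (tau k.+1)) + (T / m) *: F)
          - (s * g * r) *: (U (tau k.+1) *m N k.+1),
      U (tau k.+2) *m N k.+2 = (s / (g * r)) *: (proj e (u (tau k.+1)) + (T / m) *: F)
          - (1 - s / g) *: (U (tau k.+1) *m N k.+1) &
      proj e (a (tau k.+2)) = proj e (a (tau k.+1)) + T *: proj e (u (tau k.+1))
          + (T ^+ 2 / (2 * m)) *: F].
  move=> k; have [hdk hNk] := halt k.
  have [_ c2 c3 _ _] := coll_props (u (tau k.+1) + (d k.+1 / m) *: F) hr hg he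
      (slab_normal_pm e al be (a (tau k.+2))) (hskew k.+1).
  have hPF : proj e F = F by apply: proj_orth.
  move: c2 c3; rewrite -/(N k.+2) => c2 c3.
  split.
  - rewrite hu c2 hNk hdk projD projZ hPF mulmxN scalerN.
    by rewrite -/c -/s.
  - rewrite [U (tau k.+2)]hUk c3 hNk hdk projD projZ hPF !mulmxN !scalerN.
    by rewrite -/c -/s.
  - by rewrite [a (tau k.+2)]hx hdk !projD !projZ hPF.
pose A k := proj e (u (tau k)) + (T / (2 * m)) *: F.
pose B k := - (g * r) *: (U (tau k) *m N k) + (T / (2 * g * m)) *: F.
pose Q k := proj e (a (tau k)) + (T / 2) *: A k + (T / (2 * g)) *: B k.
have hg0 : g != 0 by apply: lt0r_neq0.
have hr0 : r != 0 by apply: lt0r_neq0.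
have hm0 : m != 0 by apply: lt0r_neq0.
have hgg : 1 + g ^+ 2 != 0 by apply: lt0r_neq0; have := sqr_ge0 g; lra.
have hstep : forall k, [/\ A k.+2 = c *: A k.+1 + s *: B k.+1,
    B k.+2 = - s *: A k.+1 + c *: B k.+1 & Q k.+2 = Q k.+1].
  move=> k; have [r1 r2 r3] := hrec k.
  rewrite /Q /A /B r1 r2 r3.
  set p := proj e (u (tau k.+1)); set w := U (tau k.+1) *m N k.+1.
  set px := proj e (a (tau k.+1)).
  split; apply/matrixP => i j; rewrite !mxE /c /s /cfac /sfac.
  - by field; rewrite ?hm0 ?hg0 ?hgg ?hr0.
  - by field; rewrite ?hm0 ?hg0 ?hgg ?hr0.
  - by field; rewrite ?hm0 ?hg0 ?hgg ?hr0.
have hQ : forall k, Q k.+1 = Q 1%N.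
  by elim=> [|k ih] //; case: (hstep k) => _ _ ->.
pose E1 := vdot (A 1%N) (A 1%N) + vdot (B 1%N) (B 1%N).
have hE : forall k, vdot (A k.+1) (A k.+1) + vdot (B k.+1) (B k.+1) = E1.
  elim=> [|k ih] //; case: (hstep k) => -> -> _.
  by rewrite rot_norm // cs_sq.
have hAb : forall k i, `|A k.+1 i 0| <= 1 + E1.
  move=> k i; apply: abs_le_sq; apply: (le_trans (coord_sq (A k.+1) i)).
  by rewrite -(hE k) lerDl vdot_ge0.
have hBb : forall k i, `|B k.+1 i 0| <= 1 + E1.
  move=> k i; apply: abs_le_sq; apply: (le_trans (coord_sq (B k.+1) i)).
  by rewrite -(hE k) lerDr vdot_ge0.
have hsq : forall (x : 'cV[R]_n) i, `|x i 0| <= 1 + vdot x x.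
  by move=> x i; apply: abs_le_sq; apply: coord_sq.
have heb : forall i, `|e i 0| <= 2.
  by move=> i; have := hsq e i; rewrite he.
have hPF : proj e F = F by apply: proj_orth.
pose X := 1 + E1.
pose Kq := 1 + vdot (Q 1%N) (Q 1%N).
pose Kf := 1 + vdot F F.
pose M1 := Kq + (T / 2) * X + (T / (2 * g)) * X + T * X + (T ^+ 2 / m) * Kf
                  + 2 * (`|al| + `|be|).
pose M0 := (1 + vdot (a 0) (a 0)) + tau 1%N * (1 + vdot (u 0) (u 0))
             + (tau 1%N ^+ 2 / (2 * m)) * Kf.
exists (`|M0| + `|M1|) => t ht i.
have [k hk] := hcov t ht.
case: k hk => [|j] hk.
- have [_ _ hat] := hflow 0%N t hk.
  rewrite h0 in hat hk; rewrite hat subr0 !mxE.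
  have hM : M0 <= `|M0| + `|M1| by have := ler_norm M0; have := normr_ge0 M1; lra.
  apply: le_trans hM.
  apply: init_bound => //; move/andP: hk => [hk1 hk2]; apply/andP; split; lra.
- have [_ _ hat] := hflow j.+1 t hk.
  have [hdj _] := halt j.
  set sg := t - tau j.+1 in hat.
  have hsg : 0 <= sg <= T.
    move/andP: hk => [hk1 hk2]; rewrite -hdj /d /sg; apply/andP; split; lra.
  have hPa : proj e (a t) = Q 1%N - (T / 2) *: A j.+1 - (T / (2 * g)) *: B j.+1
      + sg *: A j.+1 + (sg ^+ 2 / (2 * m) - sg * T / (2 * m)) *: F.
    rewrite -(hQ j) /Q /A /B hat !projD !projZ hPF.
    by apply/matrixP => i' j'; rewrite !mxE; field; rewrite ?hm0 ?hg0.
  have hq : `|Q 1%N i 0| <= Kq by exact: hsq.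
  clearbody Kq.
  have ha := hAb j i; have hb := hBb j i.
  rewrite (proj_coord e (a t)) hPa; move: hq ha hb.
  move: (Q 1%N) (A j.+1) (B j.+1) => QQ AA BB hq ha hb.
  rewrite !mxE.
  have hM : M1 <= `|M0| + `|M1| by have := ler_norm M1; have := normr_ge0 M0; lra.
  apply: le_trans hM.
  apply: final_bound => //.
  by move: (hinB t ht); rewrite /slab.
Qed.
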